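(* Consider the problem $$\min_{\pi}\ \mathrm{THR}(\pi)\quad\text{subject to}\quad R(\pi)\ge\lambda .$$ (a) If $\lambda\le\mathbb{E}[Y(0)]$, then $\pi^*_\lambda(X)\equiv 0$ is an optimal ITR, and $\mathrm{THR}(\pi^*_\lambda)=0$. (b) Suppose $\mathbb{E}[\tau(X)\,\mathbb{I}(\mathrm{THR}(X)=0)]>0$. - If $\mathbb{E}[Y(0)]<\lambda\le\mathbb{E}[Y(0)]+\mathbb{E}[\tau(X)\,\mathbb{I}(\mathrm{THR}(X)=0)]$, then $\pi^*_\lambda(X)=\mathbb{I}(\mathrm{THR}(X)=0)$ is an optimal ITR, and $\mathrm{THR}(\pi^*_\lambda)=0$. - If $\mathbb{E}[Y(0)]+\mathbb{E}[\tau(X)\,\mathbb{I}(\mathrm{THR}(X)=0)]<\lambda\le\mathbb{E}[Y(0)]+\mathbb{E}[\tau(X)\,\mathbb{I}(\tau(X)>0)]$, then the optimal ITR is $\pi^*_\lambda(X)=\mathbb{I}(\beta^*\tau(X)-\mathrm{THR}(X)>0)$, where $\beta^*$ satisfies $\mathbb{E}[Y(0)]+\mathbb{E}[\tau(X)\,\mathbb{I}(\beta^*\tau(X)-\mathrm{THR}(X)>0)]=\lambda$. - If $\mathbb{E}[Y(0)]+\mathbb{E}[\tau(X)\,\mathbb{I}(\tau(X)>0)]<\lambda$, then no solution exists. (c) Suppose $\mathbb{E}[\tau(X)\,\mathbb{I}(\mathrm{THR}(X)=0)]\le 0$. - If $\mathbb{E}[Y(0)]<\lambda\le\mathbb{E}[Y(0)]+\mathbb{E}[\tau(X)\,\mathbb{I}(\tau(X)>0)]$,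 then the optimal ITR is $\pi^*_\lambda(X)=\mathbb{I}(\beta^*\tau(X)-\mathrm{THR}(X)>0)$, where $\beta^*$ satisfies $\mathbb{E}[Y(0)]+\mathbb{E}[\tau(X)\,\mathbb{I}(\beta^*\tau(X)-\mathrm{THR}(X)>0)]=\lambda$. - If $\mathbb{E}[Y(0)]+\mathbb{E}[\tau(X)\,\mathbb{I}(\tau(X)>0)]<\lambda$, then no solution exists.
   Context: Setting. Tuples $\{X,A,Y(1),Y(0)\}$ are drawn from a superpopulation, with covariates $X\in\mathcal X$ and binary potential outcomes $Y(a)\in\{0,1\}$. Notation: - $\tau(x)=\mathbb{E}\{Y(1)-Y(0)\mid X=x\}$. - $\mathrm{THR}(x)=\mathbb{P}(Y(0)=1,Y(1)=0\mid X=x)$. - An individualized treatment rule (ITR) is a map $\pi:\mathcal X\to\{0,1\}$. - $R(\pi)=\mathbb{E}[\pi(X)Y(1)+\{1-\pi(X)\}Y(0)]$. - $\mathrm{THR}(\pi)=\mathbb{E}\{\mathrm{THR}(X)\pi(X)\}$. - $\lambda$ is a given threshold. *)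

(* Defs.v *)
From HB Require Import structures.
From mathcomp Require Import all_boot all_order all_algebra.
From mathcomp Require Import all_classical all_reals all_analysis.
Set Implicit Arguments. Unset Strict Implicit. Unset Printing Implicit Defensive.
Import Order.TTheory GRing.Theory Num.Theory.
Local Open Scope classical_set_scope.
Local Open Scope ring_scope.
Local Open Scope ereal_scope.

Section ITR.
Context {R : realType} {d d' : measure_display}
  {Omega : measurableType d} {Xt : measurableType d'}.
Variable P : probability Omega R.

Definition cond_exp_version (X : Omega -> Xt) (Z : Omega -> R) (g : Xt -> R) : Prop :=
  measurable_fun setT g /\
  P.-integrable setT (fun w => (g (X w))%:E) /\
  forall B : set Xt, measurable B ->
    \int[P]_(w in X @^-1` B) (Z w)%:E = \int[P]_(w in X @^-1` B) (g (X w))%:E.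

Definition is_THR (X : Omega -> Xt) (Y0 Y1 : Omega -> R) (thr : Xt -> R) : Prop :=
  cond_exp_version X (fun w => ((Y0 w == 1%R) && (Y1 w == 0%R))%:R) thr /\
  (forall x, (0 <= thr x <= 1)%R).

Definition is_tau (X : Omega -> Xt) (Y0 Y1 : Omega -> R) (tau : Xt -> R) : Prop :=
  cond_exp_version X (fun w => Y1 w - Y0 w)%R tau.

Definition ITR (pi : Xt -> bool) : Prop := measurable [set x | pi x].

Definition Rval (X : Omega -> Xt) (Y0 Y1 : Omega -> R) (pi : Xt -> bool) : \bar R :=
  \int[P]_w ((pi (X w))%:R * Y1 w + (1 - (pi (X w))%:R) * Y0 w)%:E.

Definition THRval (X : Omega -> Xt) (thr : Xt -> R) (pi : Xt -> bool) : \bar R :=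
  \int[P]_w (thr (X w) * (pi (X w))%:R)%:E.

Definition EY0 (Y0 : Omega -> R) : \bar R := \int[P]_w (Y0 w)%:E.

Definition Etau_ind (X : Omega -> Xt) (tau : Xt -> R) (S : Xt -> bool) : \bar R :=
  \int[P]_w (tau (X w) * (S (X w))%:R)%:E.

Definition optimal_ITR (X : Omega -> Xt) (Y0 Y1 : Omega -> R) (thr : Xt -> R)
  (lambda : R) (pi : Xt -> bool) : Prop :=
  ITR pi /\ lambda%:E <= Rval X Y0 Y1 pi /\
  forall pi' : Xt -> bool, ITR pi' -> lambda%:E <= Rval X Y0 Y1 pi' ->
    THRval X thr pi <= THRval X thr pi'.

End ITR.

(* Main.v *)
Require Import Defs.
From HB Require Import structures.
From mathcomp Require Import all_boot all_order all_algebra.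
From mathcomp Require Import all_classical all_reals all_analysis.
From mathcomp Require Import lra ring.
Import Order.TTheory GRing.Theory Num.Theory.
Local Open Scope classical_set_scope.
Local Open Scope ring_scope.
Local Open Scope ereal_scope.

Section S.
Context (R : realType) (d d' : measure_display)
  (Omega : measurableType d) (Xt : measurableType d')
  (P : probability Omega R) (X : Omega -> Xt) (Y0 Y1 : Omega -> R)
  (tau thr : Xt -> R)
  (hX : measurable_fun setT X)
  (hY0 : measurable_fun setT Y0) (hY1 : measurable_fun setT Y1)
  (hY0b : forall w, Y0 w = 0%R \/ Y0 w = 1%R)
  (hY1b : forall w, Y1 w = 0%R \/ Y1 w = 1%R)
  (htau : is_tau P X Y0 Y1 tau) (hthr : is_THR P X Y0 Y1 thr).

Lemma arith1 (e l a1 : R) : (e < l)%R -> (e + a1)%R = l -> (a1 <= 0)%R -> False.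
Proof. move=> *; lra. Qed.
Lemma arith2 (e l a1 a2 t1 t2 b : R) : (0 < b)%R -> (e + a1)%R = l -> (l <= e + a2)%R ->
  (t1 - b * a1 <= t2 - b * a2)%R -> (t1 <= t2)%R.
Proof. move=> *; nra. Qed.

Lemma ITR_of (b : Xt -> bool) : measurable_fun setT b -> ITR b.
Proof.
move=> mb; have := mb measurableT [set true] I; rewrite setTI /ITR.
by congr measurable; apply/seteqP; split => x /=.
Qed.

Lemma mtau : measurable_fun setT tau. Proof. by case: htau. Qed.
Lemma mthr : measurable_fun setT thr. Proof. by case: hthr => -[]. Qed.

Lemma mind (pi : Xt -> bool) : ITR pi ->
  measurable_fun setT (fun w => (pi (X w))%:R : R).
Proof.
move=> hpi.
have mA : measurable (X @^-1` [set x | pi x]).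
  by have := hX measurableT _ hpi; rewrite setTI.
apply: (eq_measurable_fun (\1_(X @^-1` [set x | pi x]) : Omega -> R)).
  move=> w _; rewrite indicE; have -> // : (w \in X @^-1` [set x | pi x]) = pi (X w) by apply/idP/idP => [/set_mem|/mem_set].
exact: measurable_realfun.measurable_indic.
Qed.

Lemma int_bounded (f : Omega -> R) : measurable_fun setT f ->
  (forall w, `|f w| <= 1)%R -> P.-integrable setT (EFin \o f).
Proof.
move=> mf hf; apply: (le_integrable measurableT (g := EFin \o cst 1%R)).
- exact/measurable_realfun.measurable_EFinP.
- by move=> w _ /=; rewrite lee_fin normr1.
- exact: finite_measure_integrable_cst.
Qed.

Lemma int_mul (f : Omega -> R) pi : ITR pi -> measurable_fun setT f ->
  P.-integrable setT (EFin \o f) ->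
  P.-integrable setT (fun w => (f w * (pi (X w))%:R)%:E).
Proof.
move=> hpi mf intf; apply: (le_integrable measurableT (g := EFin \o f)) => //.
- by apply/measurable_realfun.measurable_EFinP; apply: measurable_realfun.measurable_funM => //; exact: mind.
- move=> w _ /=; rewrite lee_fin normrM.
  by case: (pi (X w)); rewrite ?normr1 ?mulr1 ?normr0 ?mulr0.
Qed.


Lemma iY0 : P.-integrable setT (EFin \o Y0).
Proof. by apply: int_bounded => // w; case: (hY0b w) => ->; rewrite ?normr0 ?normr1. Qed.
Lemma iY1 : P.-integrable setT (EFin \o Y1).
Proof. by apply: int_bounded => // w; case: (hY1b w) => ->; rewrite ?normr0 ?normr1. Qed.
Lemma mtauX : measurable_fun setT (tau \o X).
Proof. exact: measurableT_comp mtau hX. Qed.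
Lemma mthrX : measurable_fun setT (thr \o X).
Proof. exact: measurableT_comp mthr hX. Qed.
Lemma itau : P.-integrable setT (EFin \o (tau \o X)).
Proof. by case: htau => _ []. Qed.
Lemma ithr : P.-integrable setT (EFin \o (thr \o X)).
Proof.
apply: int_bounded; first exact: mthrX.
by move=> w /=; case: hthr => _ /(_ (X w)) /andP[h0 h1]; rewrite ger0_norm.
Qed.

Lemma int_ind (g : Omega -> R) (pi : Xt -> bool) :
  \int[P]_w (g w * (pi (X w))%:R)%:E = \int[P]_(w in X @^-1` [set x | pi x]) (g w)%:E.
Proof.
rewrite [RHS]integral_mkcond; apply: eq_integral => w _; rewrite /patch.
have -> : (w \in X @^-1` [set x | pi x]) = pi (X w) by apply/idP/idP => [/set_mem|/mem_set].
by case: (pi (X w)); rewrite ?mulr1 ?mulr0.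
Qed.

Lemma ITRm (pi : Xt -> bool) : ITR pi -> measurable (X @^-1` [set x | pi x]).
Proof. by move=> hpi; have := hX measurableT _ hpi; rewrite setTI. Qed.

Lemma idiff : P.-integrable setT (EFin \o (fun w => (Y1 w - Y0 w)%R)%R).
Proof.
apply: (eq_integrable measurableT ((EFin \o Y1) \- (EFin \o Y0))).
  by move=> w _ /=; rewrite EFinB.
exact: integrableB iY1 iY0.
Qed.

Lemma Rval_eq pi : ITR pi -> Rval P X Y0 Y1 pi = EY0 P Y0 + Etau_ind P X tau pi.
Proof.
move=> hpi; rewrite /Rval /EY0 /Etau_ind.
transitivity (\int[P]_w ((Y0 w)%:E + ((Y1 w - Y0 w) * (pi (X w))%:R)%:E)).
  by apply: eq_integral => w _; rewrite -EFinD; congr EFin; ring.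
rewrite integralD //; last 2 first.
- exact: iY0.
- apply: (int_mul (fun w => (Y1 w - Y0 w)%R)) => //; last exact: idiff.
  exact: measurable_realfun.measurable_funB.
congr (_ + _).
rewrite (int_ind (fun w => (Y1 w - Y0 w)%R)) (int_ind (tau \o X)).
by case: htau => _ [_ ->] //; apply: hpi.
Qed.

Lemma THR_ge0 pi : 0 <= THRval P X thr pi.
Proof.
apply: integral_ge0 => w _; rewrite lee_fin; apply: mulr_ge0.
  by case: hthr => _ /(_ (X w)) /andP[].
by case: (pi (X w)).
Qed.

Lemma ithr_ind pi : ITR pi -> P.-integrable setT (fun w => (thr (X w) * (pi (X w))%:R)%:E).
Proof. by move=> hpi; apply: (int_mul (thr \o X)) => //; [exact: mthrX|exact: ithr]. Qed.
Lemma itau_ind pi : ITR pi -> P.-integrable setT (fun w => (tau (X w) * (pi (X w))%:R)%:E).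
Proof. by move=> hpi; apply: (int_mul (tau \o X)) => //; [exact: mtauX|exact: itau]. Qed.

Lemma fin_int (F : Omega -> \bar R) : P.-integrable setT F ->
  exists r : R, \int[P]_w F w = r%:E.
Proof.
move=> hF; have := integrable_fin_num measurableT hF.
by move=> /fineK <-; eexists.
Qed.

Lemma pw (a t c : R) (q : bool) :
  (a * ((0 < c*t - a)%R)%:R - c * (t * ((0 < c*t - a)%R)%:R) <= a * q%:R - c * (t * q%:R))%R.
Proof. by case: ltrP => h; case: q => /=; lra. Qed.

Lemma key beta pi : ITR pi ->
  THRval P X thr pi - beta%:E * Etau_ind P X tau pi =
  \int[P]_w ((thr (X w) * (pi (X w))%:R - beta * (tau (X w) * (pi (X w))%:R))%R)%:E.
Proof.
move=> hpi; rewrite /THRval /Etau_ind -integralZl //; last exact: (itau_ind pi hpi).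
rewrite -integralB //.
- exact: (ithr_ind pi hpi).
- by apply: integrableZl => //; exact: (itau_ind pi hpi).
Qed.

Lemma lagr beta pi : ITR pi -> ITR (fun x => (0 < beta * tau x - thr x)%R) ->
  THRval P X thr (fun x => (0 < beta * tau x - thr x)%R)
    - beta%:E * Etau_ind P X tau (fun x => (0 < beta * tau x - thr x)%R)
  <= THRval P X thr pi - beta%:E * Etau_ind P X tau pi.
Proof.
move=> hpi hpb; rewrite !key //; apply: le_integral => //.
- apply: (eq_integrable measurableT (fun w => (thr (X w) * ((0 < beta * tau (X w) - thr (X w))%R)%:R)%:E - (beta%:E * (tau (X w) * ((0 < beta * tau (X w) - thr (X w))%R)%:R)%:E))).
    by move=> w _; rewrite EFinB EFinM.
  apply: integrableB => //; first exact: (ithr_ind _ hpb).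
  by apply: integrableZl => //; exact: (itau_ind _ hpb).
- apply: (eq_integrable measurableT (fun w => (thr (X w) * (pi (X w))%:R)%:E - (beta%:E * (tau (X w) * (pi (X w))%:R)%:E))).
    by move=> w _; rewrite EFinB EFinM.
  apply: integrableB => //; first exact: (ithr_ind _ hpi).
  by apply: integrableZl => //; exact: (itau_ind _ hpi).
- by move=> w _; rewrite lee_fin; apply: pw.
Qed.

Lemma int_zero (F : Omega -> \bar R) : (forall w, F w = 0) -> \int[P]_w F w = 0.
Proof. by move=> h; rewrite (eq_integral (cst 0)) ?integral0 // => w _; exact: h. Qed.

Lemma thr_ge0 x : (0 <= thr x)%R.
Proof. by case: hthr => _ /(_ x) /andP[]. Qed.

Lemma ITR_pos : ITR (fun x => (0 < tau x)%R).
Proof. by apply: ITR_of; apply: measurable_realfun.measurable_fun_ltr => //; exact: mtau. Qed.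

Lemma ITR_z : ITR (fun x => thr x == 0%R).
Proof. by apply: ITR_of; apply: measurable_realfun.measurable_fun_eqr => //; exact: mthr. Qed.

Lemma ITR_false : ITR (fun _ : Xt => false).
Proof. by apply: ITR_of. Qed.

Lemma ITR_b beta : ITR (fun x => (0 < beta * tau x - thr x)%R).
Proof.
apply: ITR_of; apply: measurable_realfun.measurable_fun_ltr => //.
apply: measurable_realfun.measurable_funB; last exact: mthr.
by apply: measurable_realfun.measurable_funM => //; exact: mtau.
Qed.

Lemma Etau_le_pos pi : ITR pi -> Etau_ind P X tau pi <= Etau_ind P X tau (fun x => (0 < tau x)%R).
Proof.
move=> hpi; apply: le_integral => //; [exact: itau_ind|exact: (itau_ind _ ITR_pos)|].
move=> w _; rewrite lee_fin.
by case: (pi (X w)); case: (ltrP 0 (tau (X w))) => h /=; lra.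
Qed.

Lemma Etau_nonpos beta : (beta <= 0)%R ->
  Etau_ind P X tau (fun x => (0 < beta * tau x - thr x)%R) <= 0.
Proof.
move=> hb.
have -> : 0 = \int[P]_w (cst 0 w) :> \bar R by rewrite integral0.
apply: le_integral => //; [exact: (itau_ind _ (ITR_b beta))|exact: integrable0|].
move=> w _; rewrite /= lee_fin.
have := thr_ge0 (X w).
by case: (ltrP 0 (beta * tau (X w) - thr (X w))) => h /= h0; nra.
Qed.

Local Notation E0 := (EY0 P Y0).
Local Notation Ez := (Etau_ind P X tau (fun x => thr x == 0%R)).
Local Notation Epos := (Etau_ind P X tau (fun x => (0 < tau x)%R)).

Lemma opt0 lambda pi : ITR pi -> lambda%:E <= Rval P X Y0 Y1 pi -> THRval P X thr pi = 0 ->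
  optimal_ITR P X Y0 Y1 thr lambda pi.
Proof. by move=> hpi hl h0; split => //; split => // pi' _ _; rewrite h0; exact: THR_ge0. Qed.

Lemma nosol lambda : E0 + Epos < lambda%:E ->
  ~ exists pi, optimal_ITR P X Y0 Y1 thr lambda pi.
Proof.
move=> hl [pi [hpi [hr _]]].
have := Etau_le_pos _ hpi; rewrite Rval_eq // in hr.
move=> /(leeD2l E0) h.
have := lt_le_trans hl (le_trans hr h).
by rewrite ltxx.
Qed.

Lemma optb lambda beta : E0 < lambda%:E ->
  E0 + Etau_ind P X tau (fun x => (0 < beta * tau x - thr x)%R) = lambda%:E ->
  optimal_ITR P X Y0 Y1 thr lambda (fun x => (0 < beta * tau x - thr x)%R).
Proof.
move=> hl hb; have hpb := ITR_b beta.
split => //; split; first by rewrite Rval_eq // hb.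
move=> pi' hpi' hl'; rewrite Rval_eq // in hl'.
have [e he] : exists r, E0 = r%:E := fin_int _ iY0.
have [a1 ha1] := fin_int _ (itau_ind _ hpb).
have [a2 ha2] := fin_int _ (itau_ind _ hpi').
have [t1 ht1] := fin_int _ (ithr_ind _ hpb).
have [t2 ht2] := fin_int _ (ithr_ind _ hpi').
rewrite /Etau_ind in hb hl'.
rewrite he ha1 in hl hb; rewrite he ha2 in hl'.
move: hl hl' hb; rewrite lte_fin -EFinD lee_fin => hl hl' [] hb.
have hbpos : (0 < beta)%R.
  rewrite ltNge; apply/negP => hb0.
  have := Etau_nonpos _ hb0; rewrite /Etau_ind ha1 lee_fin => ha.
  exact: (arith1 _ _ _ hl hb ha).
have := lagr beta _ hpi' hpb.
rewrite /THRval /Etau_ind ht1 ht2 ha1 ha2 -!EFinM -!EFinB !lee_fin => hlag.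
rewrite ?lee_fin.
exact: (arith2 _ _ _ _ _ _ _ hbpos hb hl' hlag).
Qed.

Lemma main_sec lambda :
  (lambda%:E <= E0 ->
     optimal_ITR P X Y0 Y1 thr lambda (fun _ => false) /\
     THRval P X thr (fun _ => false) = 0) /\
  (0 < Ez ->
     (E0 < lambda%:E <= E0 + Ez ->
        optimal_ITR P X Y0 Y1 thr lambda (fun x => thr x == 0%R) /\
        THRval P X thr (fun x => thr x == 0%R) = 0) /\
     (E0 + Ez < lambda%:E <= E0 + Epos ->
        forall beta : R, E0 + Etau_ind P X tau ((fun beta : R => (fun x => (0 < beta * tau x - thr x)%R)) beta) = lambda%:E ->
        optimal_ITR P X Y0 Y1 thr lambda ((fun beta : R => (fun x => (0 < beta * tau x - thr x)%R)) beta)) /\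
     (E0 + Epos < lambda%:E ->
        ~ exists pi, optimal_ITR P X Y0 Y1 thr lambda pi)) /\
  (Ez <= 0 ->
     (E0 < lambda%:E <= E0 + Epos ->
        forall beta : R, E0 + Etau_ind P X tau ((fun beta : R => (fun x => (0 < beta * tau x - thr x)%R)) beta) = lambda%:E ->
        optimal_ITR P X Y0 Y1 thr lambda ((fun beta : R => (fun x => (0 < beta * tau x - thr x)%R)) beta)) /\
     (E0 + Epos < lambda%:E ->
        ~ exists pi, optimal_ITR P X Y0 Y1 thr lambda pi)).
Proof.
have T0f : THRval P X thr (fun _ => false) = 0.
  by apply: int_zero => w /=; rewrite mulr0.
have T0z : THRval P X thr (fun x => thr x == 0%R) = 0.
  apply: int_zero => w /=; case: eqP => [->|_] /=; by rewrite ?mul0r ?mulr0.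
have Ef : Etau_ind P X tau (fun _ => false) = 0.
  by apply: int_zero => w /=; rewrite mulr0.
split.
  move=> hl; split => //; apply: opt0 => //; first exact: ITR_false.
  by rewrite Rval_eq ?Ef ?adde0 //; exact: ITR_false.
split.
  move=> hz; split.
    move=> /andP[h1 h2]; split => //; apply: opt0 => //; first exact: ITR_z.
    by rewrite Rval_eq //; exact: ITR_z.
  split; last exact: nosol.
  move=> /andP[h1 _] beta hb; apply: optb => //.
  have [e he] : exists r, E0 = r%:E := fin_int _ iY0.
  have [z hz'] := fin_int _ (itau_ind _ ITR_z).
  move: hz h1; rewrite /Etau_ind hz' he -EFinD !lte_fin; lra.
move=> hz; split; last exact: nosol.
by move=> /andP[h1 _] beta hb; apply: optb.
Qed.
End S.

Theorem theoremS1 (R : realType) (d d' : measure_display)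
  (Omega : measurableType d) (Xt : measurableType d')
  (P : probability Omega R) (X : Omega -> Xt) (Y0 Y1 : Omega -> R)
  (tau thr : Xt -> R) (lambda : R)
  (hX : measurable_fun setT X)
  (hY0 : measurable_fun setT Y0) (hY1 : measurable_fun setT Y1)
  (hY0b : forall w, Y0 w = 0%R \/ Y0 w = 1%R)
  (hY1b : forall w, Y1 w = 0%R \/ Y1 w = 1%R)
  (htau : is_tau P X Y0 Y1 tau) (hthr : is_THR P X Y0 Y1 thr) :
  let E0 := EY0 P Y0 in
  let Ez := Etau_ind P X tau (fun x => thr x == 0%R) in
  let Epos := Etau_ind P X tau (fun x => (0 < tau x)%R) in
  let pibeta := fun beta : R => (fun x => (0 < beta * tau x - thr x)%R) in
  (* (a) *)
  (lambda%:E <= E0 ->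
     optimal_ITR P X Y0 Y1 thr lambda (fun _ => false) /\
     THRval P X thr (fun _ => false) = 0) /\
  (* (b) *)
  (0 < Ez ->
     (E0 < lambda%:E <= E0 + Ez ->
        optimal_ITR P X Y0 Y1 thr lambda (fun x => thr x == 0%R) /\
        THRval P X thr (fun x => thr x == 0%R) = 0) /\
     (E0 + Ez < lambda%:E <= E0 + Epos ->
        forall beta : R, E0 + Etau_ind P X tau (pibeta beta) = lambda%:E ->
        optimal_ITR P X Y0 Y1 thr lambda (pibeta beta)) /\
     (E0 + Epos < lambda%:E ->
        ~ exists pi, optimal_ITR P X Y0 Y1 thr lambda pi)) /\
  (* (c) *)
  (Ez <= 0 ->
     (E0 < lambda%:E <= E0 + Epos ->
        forall beta : R, E0 + Etau_ind P X tau (pibeta beta) = lambda%:E ->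
        optimal_ITR P X Y0 Y1 thr lambda (pibeta beta)) /\
     (E0 + Epos < lambda%:E ->
        ~ exists pi, optimal_ITR P X Y0 Y1 thr lambda pi)).
Proof.
move=> E0 Ez Epos pibeta.
exact: (@main_sec R d d' Omega Xt P X Y0 Y1 tau thr hX hY0 hY1 hY0b hY1b htau hthr lambda).
Qed.
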